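(* Let $k,\ell\ge2$ be integers. The sequence $(g_{k,\ell}(n))_{n\ge0}$ is $k$-synchronized if and only if $k=\ell$.
   Context: For integers $k,\ell\ge 2$ define $g_{k,\ell}(0)=1$ and $g_{k,\ell}(n)=1+\ell^{\lfloor \log_k n\rfloor}$ for $n>0$. A sequence $(f(n))_{n\ge0}$ of natural numbers is $k$-synchronized if there is a deterministic finite automaton accepting exactly the set of words $(n,m)_k$ with $m=f(n)$, where $(n,m)_k$ denotes the word over the alphabet of digit pairs obtained by writing $n$ and $m$ in base $k$, padding the shorter representation with leading zeros, and reading the digits in parallel. *)

(* Defs.v *)
From mathcomp Require Import all_boot.
Set Implicit Arguments. Unset Strict Implicit. Unset Printing Implicit Defensive.

(* Reversed base-k digits (least significant first); [n] serves as fuel,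
   which suffices for k >= 2. The canonical representation of 0 is the
   empty word; no leading zeros otherwise. *)
Fixpoint rdigits (fuel k n : nat) : seq nat :=
  match fuel with
  | 0 => [::]
  | f.+1 => if n == 0 then [::] else n %% k :: rdigits f k (n %/ k)
  end.

Definition base_rep (k n : nat) : seq nat := rev (rdigits n k n).

Definition pad (L : nat) (w : seq nat) : seq nat := nseq (L - size w) 0 ++ w.

Definition pair_rep (k n m : nat) : seq (nat * nat) :=
  let a := base_rep k n in
  let b := base_rep k m in
  let L := maxn (size a) (size b) in
  zip (pad L a) (pad L b).

Record dfa (A : Type) := DFA {
  state : finType;
  start : state;
  delta : state -> A -> state;
  final : pred state
}.

Definition accepts (A : Type) (D : dfa A) (w : seq A) : bool :=
  @final A D (foldl (@delta A D) (@start A D) w).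

Definition digit_pair (k : nat) := ('I_k * 'I_k)%type.

Definition word_val (k : nat) (w : seq (digit_pair k)) : seq (nat * nat) :=
  map (fun p : digit_pair k => (nat_of_ord p.1, nat_of_ord p.2)) w.

Definition k_synchronized (k : nat) (f : nat -> nat) : Prop :=
  exists D : dfa (digit_pair k),
    forall w : seq (digit_pair k),
      accepts D w <-> exists n, word_val w = pair_rep k n (f n).

Definition g (k l n : nat) : nat :=
  if n == 0 then 1 else 1 + l ^ trunc_log k n.

Example base_rep_test : base_rep 2 6 = [:: 1; 1; 0]. Proof. by []. Qed.
Example pair_rep_test : pair_rep 2 2 5 = [:: (0,1); (1,0); (0,1)]. Proof. by []. Qed.
Example g_test : g 2 3 5 = 10. Proof. by []. Qed.

(* Main.v *)
Require Import Defs.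
From mathcomp Require Import all_boot.
From mathcomp Require Import zify.
From Stdlib Require Import Classical.

Fixpoint numr (k : nat) (r : seq nat) : nat :=
  if r is d :: r' then d + k * numr k r' else 0.
Definition num k s := numr k (rev s).

Lemma rdigits0 f k : rdigits f k 0 = [::].
Proof. by case: f. Qed.

Lemma rdigitsS f k n : 0 < n -> rdigits f.+1 k n = n %% k :: rdigits f k (n %/ k).
Proof. by move=> /= n0; rewrite ifN // -lt0n. Qed.

Lemma numr_rdigits k : 1 < k -> forall f n, n <= f -> numr k (rdigits f k n) = n.
Proof.
move=> k1; elim=> [|f IH] n nf; first by have -> : n = 0 by lia.
case: (posnP n) => [->|n0]; first by rewrite rdigits0.
rewrite rdigitsS //= IH; last first.
  have := ltn_Pdiv k1 n0; lia.
by rewrite [in RHS](divn_eq n k); lia.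
Qed.

Lemma all_rdigits k : 0 < k -> forall f n, all (fun d => d < k) (rdigits f k n).
Proof.
move=> k0; elim=> [|f IH] n //=.
case: (n == 0) => //=; by rewrite ltn_pmod // IH.
Qed.

Lemma size_rdigits k : 1 < k -> forall f n, n <= f ->
  forall s, (size (rdigits f k n) <= s) = (n < k ^ s).
Proof.
move=> k1; elim=> [|f IH] n nf s.
  have -> : n = 0 by lia.  by rewrite expn_gt0; have -> : 0 < k by lia.
case: (posnP n) => [->|n0]; first by rewrite rdigits0 expn_gt0; have -> : 0 < k by lia.
rewrite rdigitsS //=; case: s => [|s]; first by rewrite expn0; lia.
rewrite ltnS IH; last by have := ltn_Pdiv k1 n0; lia.
by rewrite ltn_divLR ?expnSr //; lia.
Qed.

Lemma last_rdigits k : 1 < k -> forall f n, 0 < n -> n <= f ->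
  exists r a, rdigits f k n = rcons r a /\ 0 < a.
Proof.
move=> k1; elim=> [|f IH] n n0 nf; first by lia.
rewrite rdigitsS //.
case: (posnP (n %/ k)) => [q0|q0].
  rewrite q0 rdigits0; exists [::], (n %% k); split => //.
  move: (divn_eq n k); rewrite q0; lia.
have [r [a [-> a0]]] := IH (n %/ k) q0 (ltac:(have := ltn_Pdiv k1 n0; lia)).
by exists (n %% k :: r), a.
Qed.

Lemma numr_cat k r1 r2 : numr k (r1 ++ r2) = numr k r1 + k ^ size r1 * numr k r2.
Proof. elim: r1 => [|d r IH] /=; first by rewrite expn0; lia. rewrite IH expnS; lia. Qed.

Lemma numr_nseq0 k n : numr k (nseq n 0) = 0.
Proof. by elim: n => //= n ->; lia. Qed.

Lemma numr_rcons_pos k r a : 0 < k -> 0 < a -> 0 < numr k (rcons r a).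
Proof.
move=> k0 a0; rewrite -cats1 numr_cat /=.
have : 0 < k ^ size r by rewrite expn_gt0 k0. nia.
Qed.

Lemma rdigits_numr k : 1 < k -> forall r a f, all (fun d => d < k) (rcons r a) -> 0 < a ->
  numr k (rcons r a) <= f -> rdigits f k (numr k (rcons r a)) = rcons r a.
Proof.
move=> k1; elim=> [|d r IH] a f /=.
  rewrite andbT => ak a0; rewrite muln0 addn0 => af.
  case: f af => [|f] af; first by lia.
  by rewrite rdigitsS // modn_small // divn_small // rdigits0.
move=> /andP [dk hall] a0 hf.
have X0 := numr_rcons_pos k r a (ltac:(lia) : 0 < k) a0.
case: f hf => [|f] hf; first by lia.
rewrite rdigitsS; last by lia.
have -> : (d + k * numr k (rcons r a)) %% k = d.
  by rewrite mulnC addnC modnMDl modn_small.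
have -> : (d + k * numr k (rcons r a)) %/ k = numr k (rcons r a).
  by rewrite mulnC addnC divnMDl ?divn_small //; lia.
rewrite IH //; nia.
Qed.

Lemma base_rep_num k a s : 1 < k -> 0 < a -> all (fun d => d < k) (a :: s) ->
  base_rep k (num k (a :: s)) = a :: s.
Proof.
move=> k1 a0 hall; rewrite /base_rep /num rev_cons rdigits_numr //.
- by rewrite rev_rcons revK.
- by rewrite -rev_cons all_rev.
Qed.

Lemma num_cat k s t : num k (s ++ t) = num k s * k ^ size t + num k t.
Proof. rewrite /num rev_cat numr_cat size_rev; lia. Qed.

Lemma num_nseq0 k n s : num k (nseq n 0 ++ s) = num k s.
Proof. by rewrite num_cat /num rev_nseq numr_nseq0. Qed.

Lemma num_base_rep k n : 1 < k -> num k (base_rep k n) = n.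
Proof. by move=> k1; rewrite /num /base_rep revK numr_rdigits. Qed.

Lemma all_base_rep k n : 1 < k -> all (fun d => d < k) (base_rep k n).
Proof. by move=> k1; rewrite all_rev all_rdigits //; lia. Qed.

Lemma size_base_rep_le k n s : 1 < k -> (size (base_rep k n) <= s) = (n < k ^ s).
Proof. by move=> k1; rewrite size_rev size_rdigits. Qed.

Lemma size_base_rep k n : 1 < k -> 0 < n -> size (base_rep k n) = (trunc_log k n).+1.
Proof.
move=> k1 n0; apply/eqP; rewrite eqn_leq size_base_rep_le // trunc_log_ltn //=.
rewrite ltnNge size_base_rep_le // -leqNgt; exact: trunc_logP.
Qed.

Lemma base_rep_head k n : 1 < k -> 0 < n -> exists a s, base_rep k n = a :: s /\ 0 < a.
Proof.
move=> k1 n0; have [r [a [E a0]]] := last_rdigits k k1 n n n0 (leqnn n).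
by exists a, (rev r); rewrite /base_rep E rev_rcons.
Qed.

Lemma base_rep0 k : base_rep k 0 = [::].
Proof. by []. Qed.

Lemma size_pad L w : size w <= L -> size (pad L w) = L.
Proof. by move=> h; rewrite /pad size_cat size_nseq subnK. Qed.

Lemma size_pair_rep k n m :
  size (pair_rep k n m) = maxn (size (base_rep k n)) (size (base_rep k m)).
Proof. by rewrite /pair_rep size_zip !size_pad ?leq_maxl ?leq_maxr // minnn. Qed.

Lemma unzip1_pair_rep k n m : unzip1 (pair_rep k n m) =
  pad (maxn (size (base_rep k n)) (size (base_rep k m))) (base_rep k n).
Proof. by rewrite /pair_rep unzip1_zip // !size_pad ?leq_maxl ?leq_maxr. Qed.

Lemma unzip2_pair_rep k n m : unzip2 (pair_rep k n m) =
  pad (maxn (size (base_rep k n)) (size (base_rep k m))) (base_rep k m).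
Proof. by rewrite /pair_rep unzip2_zip // !size_pad ?leq_maxl ?leq_maxr. Qed.

Lemma expn_mono_base a b e : a <= b -> a ^ e <= b ^ e.
Proof. move=> ab; elim: e => [|e IH]; rewrite ?expn0 // !expnS; exact: leq_mul. Qed.

Lemma bernoulli a m : a ^ m * (a + m) <= a * (a + 1) ^ m.
Proof.
elim: m => [|m IH]; first by rewrite !expn0; lia.
rewrite !expnS.
have h : a ^ m * (a + m) * (a + 1) <= a * (a + 1) ^ m * (a + 1) by rewrite leq_mul2r IH orbT.
nia.
Qed.

Lemma growth a b C : 0 < a -> a < b -> exists t, C * a ^ t <= b ^ t.
Proof.
move=> a0 ab; exists (a * C).
have h1 : 2 * a ^ a <= (a + 1) ^ a.
  have := bernoulli a a. nia.
have h2 : forall r, 2 ^ r * a ^ (a * r) <= (a + 1) ^ (a * r).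
  elim=> [|r IH]; first by rewrite muln0 !expn0.
  rewrite mulnS !expnD expnS.
  have := leq_mul h1 IH. nia.
have h3 : C <= 2 ^ C by apply: ltnW; rewrite ltn_expl.
have hb : (a+1)^(a*C) <= b^(a*C) by apply: expn_mono_base; lia.
apply: leq_trans hb; apply: leq_trans (h2 C); exact: leq_mul.
Qed.

Lemma pump_down (A : Type) (D : dfa A) (v x : seq A) :
  #|state D| < (size v).+1 -> accepts D (v ++ x) ->
  exists i j, i < j <= size v /\ accepts D (take i v ++ drop j v ++ x).
Proof.
move=> hc acc.
pose f := fun t : 'I_(size v).+1 => foldl (@delta A D) (@start A D) (take t v).
have ninj : ~ injective f.
  move=> inj; have := leq_card f inj; rewrite card_ord; lia.
have [i0 [j0 [E ne]]] : exists i0 j0, f i0 = f j0 /\ i0 <> j0.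
  apply: NNPP => H; apply: ninj => p q Epq; apply: NNPP => Hne; apply: H; by exists p, q.
have key : forall i j : 'I_(size v).+1, i < j -> f i = f j ->
   accepts D (take i v ++ drop j v ++ x).
  move=> i j ij Eij; rewrite /accepts foldl_cat.
  rewrite /f in Eij; rewrite Eij -foldl_cat catA cat_take_drop; exact: acc.
case: (ltngtP i0 j0) => h.
- exists i0, j0; split; last exact: key.
  by rewrite h -ltnS ltn_ord.
- exists j0, i0; split; last by apply: key.
  by rewrite h -ltnS ltn_ord.
- by exfalso; apply: ne; apply: val_inj.
Qed.

Lemma word_of k (W : seq (nat * nat)) :
  all (fun p => (p.1 < k) && (p.2 < k)) W -> exists w : seq (digit_pair k), word_val w = W.
Proof.
elim: W => [|[p1 p2] W IH] /=; first by exists [::].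
move=> /andP [/andP [h1 h2] hW]; have [w Ew] := IH hW.
by exists ((Ordinal h1, Ordinal h2) :: w); rewrite /= Ew.
Qed.

Lemma all_zip_unzip (S T : Type) (a : pred S) (b : pred T) (W : seq (S * T)) :
  all a (unzip1 W) -> all b (unzip2 W) -> all (fun p => a p.1 && b p.2) W.
Proof. elim: W => [|p W IH] //= /andP [-> h1] /andP [-> h2] /=; exact: IH. Qed.

Lemma all_pad k L s : 0 < k -> all (fun d => d < k) s -> all (fun d => d < k) (pad L s).
Proof. by move=> k0 hs; rewrite /pad all_cat hs andbT all_nseq k0 orbT. Qed.

Lemma all_pair_rep k n m : 1 < k ->
  all (fun p => (p.1 < k) && (p.2 < k)) (pair_rep k n m).
Proof.
move=> k1; apply: (@all_zip_unzip nat nat (fun d => d < k) (fun d => d < k)).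
- by rewrite unzip1_pair_rep all_pad ?all_base_rep //; lia.
- by rewrite unzip2_pair_rep all_pad ?all_base_rep //; lia.
Qed.

Lemma num_pump k R a i j : i <= j -> j <= R ->
  num k (take i (take R (nseq R 0 ++ a)) ++ drop j (take R (nseq R 0 ++ a))
     ++ drop R (nseq R 0 ++ a)) = num k (nseq R 0 ++ a).
Proof.
move=> ij jR.
have e1 : take R (nseq R 0 ++ a) = nseq R 0 by rewrite take_size_cat ?size_nseq.
have e2 : drop R (nseq R 0 ++ a) = a by rewrite drop_size_cat ?size_nseq.
rewrite e1 e2 take_nseq ?drop_nseq; last by lia.
by rewrite !num_nseq0.
Qed.

Lemma map_pump (S T : Type) (h : S -> T) (s : seq S) i j R :
  map h (take i (take R s) ++ drop j (take R s) ++ drop R s) =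
  take i (take R (map h s)) ++ drop j (take R (map h s)) ++ drop R (map h s).
Proof. by rewrite !map_cat map_take map_take map_drop map_take map_drop. Qed.

Lemma unzip1_wv k (s : seq (digit_pair k)) i j R :
  unzip1 (word_val (take i (take R s) ++ drop j (take R s) ++ drop R s)) =
  take i (take R (unzip1 (word_val s))) ++ drop j (take R (unzip1 (word_val s)))
    ++ drop R (unzip1 (word_val s)).
Proof. by rewrite /word_val /unzip1 /unzip2 !map_pump. Qed.

Lemma unzip2_wv k (s : seq (digit_pair k)) i j R :
  unzip2 (word_val (take i (take R s) ++ drop j (take R s) ++ drop R s)) =
  take i (take R (unzip2 (word_val s))) ++ drop j (take R (unzip2 (word_val s)))
    ++ drop R (unzip2 (word_val s)).
Proof. by rewrite /word_val /unzip1 /unzip2 !map_pump. Qed.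

Lemma num_unzip1_pair_rep k n m : 1 < k -> num k (unzip1 (pair_rep k n m)) = n.
Proof. by move=> k1; rewrite unzip1_pair_rep /pad num_nseq0 num_base_rep. Qed.

Lemma num_unzip2_pair_rep k n m : 1 < k -> num k (unzip2 (pair_rep k n m)) = m.
Proof. by move=> k1; rewrite unzip2_pair_rep /pad num_nseq0 num_base_rep. Qed.

Lemma g_inj_size k l n n' : 1 < k -> 1 < l -> 0 < n -> g k l n' = g k l n ->
  size (base_rep k n') = size (base_rep k n).
Proof.
move=> k1 l1 n0.
have -> : g k l n = 1 + l ^ trunc_log k n by rewrite /g ifN // -lt0n.
rewrite /g; case: (posnP n') => [->|n'0].
  rewrite /=; have : 0 < l ^ trunc_log k n by rewrite expn_gt0; lia. lia.
move=> E; have : l ^ trunc_log k n' = l ^ trunc_log k n by lia.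
move/eqP; rewrite eqn_exp2l // => /eqP E2.
by rewrite !size_base_rep // E2.
Qed.

Lemma g_pow k l t : 1 < k -> g k l (k ^ t) = 1 + l ^ t.
Proof. move=> k1; rewrite /g ifN ?trunc_expnK // -lt0n expn_gt0; lia. Qed.

Lemma witnessA k l N : 1 < k -> k < l ->
  exists n, 0 < n /\ size (base_rep k n) + N < size (base_rep k (g k l n)).
Proof.
move=> k1 kl; have [t ht] := growth k l (k ^ N.+1) (ltac:(lia) : 0 < k) kl.
exists (k ^ t); split; first by rewrite expn_gt0; lia.
rewrite size_base_rep ?expn_gt0 ?trunc_expnK //; last by lia.
rewrite g_pow // ltnNge size_base_rep_le // -leqNgt.
have -> : t.+1 + N = N.+1 + t by lia.
rewrite expnD; lia.
Qed.

Lemma witnessB k l N : 1 < l -> l < k ->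
  exists n, 0 < n /\ size (base_rep k (g k l n)) + N < size (base_rep k n).
Proof.
move=> l1 lk; have [t ht] := growth l k (2 * l ^ N.+1) (ltac:(lia) : 0 < l) lk.
have k1 : 1 < k by lia.
exists (k ^ (N.+1 + t)); split; first by rewrite expn_gt0; lia.
rewrite (size_base_rep k (k ^ (N.+1 + t))) ?expn_gt0 ?trunc_expnK //; last by lia.
rewrite g_pow //.
have : size (base_rep k (1 + l ^ (N.+1 + t))) <= t.+1.
  rewrite size_base_rep_le // expnD (expnS k t).
  have : 0 < l ^ N.+1 * l ^ t by rewrite muln_gt0 !expn_gt0; lia.
  nia.
lia.
Qed.

Lemma sync_eq k l : 1 < k -> 1 < l -> k_synchronized k (g k l) -> k = l.
Proof.
move=> k1 l1 [D hD]; case: (ltngtP k l) => // hkl; exfalso.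
- have [n [n0 hn]] := witnessA k l #|state D| k1 hkl.
  have [w Ew] := word_of k _ (all_pair_rep k n (g k l n) k1).
  have acc : accepts D w by apply/hD; exists n.
  set a := base_rep k n in hn; set b := base_rep k (g k l n) in hn.
  have hL : maxn (size a) (size b) = size b by apply/maxn_idPr; lia.
  have hsw : size w = size b.
    by rewrite -(size_map (fun p : digit_pair k => (nat_of_ord p.1, nat_of_ord p.2)))
      -/(word_val w) Ew size_pair_rep hL.
  pose R := size b - size a.
  have sv : size (take R w) = R by rewrite size_takel //; lia.
  have [i [j [hij acc']]] : exists i j, i < j <= size (take R w) /\
      accepts D (take i (take R w) ++ drop j (take R w) ++ drop R w).
    apply: pump_down; first by rewrite sv; lia.
    by rewrite cat_take_drop.
  rewrite sv in hij.
  have [n' En'] := (hD _).1 acc'.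
  have nn : n' = n.
    have := num_unzip1_pair_rep k n' (g k l n') k1.
    rewrite -En' unzip1_wv Ew unzip1_pair_rep -/a -/b hL /pad -/R num_pump; last 2 first.
    + lia.
    + lia.
    by rewrite num_nseq0 num_base_rep.
  have := congr1 size En'; rewrite nn -Ew !size_map !size_cat size_drop !size_takel ?sv; try lia.
  by rewrite size_drop; lia.
- have [n [n0 hn]] := witnessB k l #|state D| l1 hkl.
  have [w Ew] := word_of k _ (all_pair_rep k n (g k l n) k1).
  have acc : accepts D w by apply/hD; exists n.
  set a := base_rep k n in hn; set b := base_rep k (g k l n) in hn.
  have hL : maxn (size a) (size b) = size a by apply/maxn_idPl; lia.
  have hsw : size w = size a.
    by rewrite -(size_map (fun p : digit_pair k => (nat_of_ord p.1, nat_of_ord p.2)))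
      -/(word_val w) Ew size_pair_rep hL.
  pose R := size a - size b.
  have sv : size (take R w) = R by rewrite size_takel //; lia.
  have [i [j [hij acc']]] : exists i j, i < j <= size (take R w) /\
      accepts D (take i (take R w) ++ drop j (take R w) ++ drop R w).
    apply: pump_down; first by rewrite sv; lia.
    by rewrite cat_take_drop.
  rewrite sv in hij.
  have [n' En'] := (hD _).1 acc'.
  have gg : g k l n' = g k l n.
    have := num_unzip2_pair_rep k n' (g k l n') k1.
    rewrite -En' unzip2_wv Ew unzip2_pair_rep -/a -/b hL /pad -/R num_pump; last 2 first.
    + lia.
    + lia.
    by rewrite num_nseq0 num_base_rep.
  have hs := g_inj_size k l n n' k1 l1 n0 gg.
  have := congr1 size En'; rewrite size_pair_rep gg hs -size_pair_rep -Ew.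
  rewrite !size_map !size_cat size_drop !size_takel ?sv; try lia.
  by rewrite size_drop; lia.
Qed.

Definition stepn (k : nat) (s : nat) (p : nat * nat) : nat :=
  match s with
  | 0 => if p == (0, 1) then 1
         else if (p.1 != 0) && (p.2 == 2) then 3
         else if (p.1 != 0) && (p.2 == 1) then 4 else 6
  | 1 => if (k == 2) && (p == (1, 0)) then 2 else 6
  | 4 => if p.2 == 0 then 4 else if p.2 == 1 then 5 else 6
  | _ => 6
  end.

Lemma stepn_lt k s p : stepn k s p < 7.
Proof.
rewrite /stepn; case: s => [|[|[|[|[|s]]]]] //=; repeat (case: ifP => _ //).
Qed.

Definition Dk (k : nat) : dfa (digit_pair k) :=
  @DFA (digit_pair k) 'I_7 ord0
    (fun s p => inord (stepn k s (nat_of_ord p.1, nat_of_ord p.2)))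
    (fun s => nat_of_ord s \in [:: 1; 2; 3; 5]).

Lemma Dk_run k (s : 'I_7) (w : seq (digit_pair k)) :
  nat_of_ord (foldl (@delta _ (Dk k)) s w) = foldl (stepn k) s (word_val w).
Proof.
elim: w s => [|p w IH] s //=.
by rewrite IH /= inordK // stepn_lt.
Qed.

Lemma Dk_accepts k w :
  accepts (Dk k) w = (foldl (stepn k) 0 (word_val w) \in [:: 1; 2; 3; 5]).
Proof. by rewrite /accepts /= Dk_run. Qed.

Lemma run_dead k W : foldl (stepn k) 6 W = 6.
Proof. by elim: W. Qed.

Lemma run_D_inv k W : foldl (stepn k) 4 W \in [:: 1; 2; 3; 5] ->
  exists mid y, W = rcons mid (y, 1) /\ all (fun p => p.2 == 0) mid.
Proof.
elim: W => [|[p1 p2] W IH] //=.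
case: ifP => [/eqP h2|_].
  move=> /IH [mid [y [-> hm]]]; exists ((p1, p2) :: mid), y; split => //=.
  by rewrite h2 eqxx.
case: ifP => [/eqP h2|_]; last by rewrite run_dead.
case: W {IH} => [|q W] /=.
  by move=> _; exists [::], p1; rewrite h2.
by rewrite run_dead.
Qed.

Lemma run_D k mid y : all (fun p => p.2 == 0) mid ->
  foldl (stepn k) 4 (rcons mid (y, 1)) = 5.
Proof.
move=> h; rewrite foldl_rcons.
suff -> : foldl (stepn k) 4 mid = 4 by [].
elim: mid h => [|p mid IH] //= /andP [/eqP -> h]; exact: IH.
Qed.

Lemma num1 k : num k [:: 1] = 1.
Proof. by rewrite /num /= muln0 addn0. Qed.

Lemma num_single k a : num k [:: a] = a.
Proof. by rewrite /num /= muln0 addn0. Qed.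

Lemma rep_form k a X y : 1 < k -> 0 < a -> all (fun d => d < k) (a :: rcons X y) ->
  pair_rep k (num k (a :: rcons X y)) (g k k (num k (a :: rcons X y))) =
  (a, 1) :: rcons (zip X (nseq (size X) 0)) (y, 1).
Proof.
move=> k1 a0 hall.
set n := num k (a :: rcons X y).
have Hs : base_rep k n = a :: rcons X y by rewrite base_rep_num.
have n0 : 0 < n.
  rewrite lt0n; apply/eqP => E; move: Hs; by rewrite E.
have tl : trunc_log k n = (size X).+1.
  have := size_base_rep k n k1 n0; rewrite Hs /= size_rcons; lia.
have gn : g k k n = num k (1 :: rcons (nseq (size X) 0) 1).
  rewrite /g ifN -?lt0n // tl -cats1 -cat1s num_cat num1 num_nseq0 num1.
  rewrite size_cat size_nseq /=; lia.
have Ht : base_rep k (g k k n) = 1 :: rcons (nseq (size X) 0) 1.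
  rewrite gn base_rep_num //= all_rcons all_nseq; apply/and3P; split; lia.
rewrite /pair_rep Hs Ht /pad /= !size_rcons size_nseq maxnn subnn /=.
by rewrite zip_rcons // size_nseq.
Qed.

Lemma all_wv k (w : seq (digit_pair k)) :
  all (fun p => (p.1 < k) && (p.2 < k)) (word_val w).
Proof. rewrite all_map; apply/allP => p _ /=; by rewrite !ltn_ord. Qed.

Lemma base_rep_single k a : 1 < k -> 0 < a -> a < k -> base_rep k a = [:: a].
Proof.
move=> k1 a0 ak; have h := base_rep_num k a [::] k1 a0.
rewrite num_single /= ak in h; exact: h.
Qed.

Lemma pair_rep0 k : 1 < k -> pair_rep k 0 (g k k 0) = [:: (0, 1)].
Proof. by move=> k1; rewrite /pair_rep /g /= modn_small. Qed.

Lemma g_small k a : 1 < k -> 0 < a -> a < k -> g k k a = 2.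
Proof.
move=> k1 a0 ak; rewrite /g ifN -?lt0n //.
have /eqP -> : trunc_log k a == 0 by rewrite trunc_log_eq0; apply/orP; right; lia.
by [].
Qed.

Lemma unzip2_zero (mid : seq (nat * nat)) : all (fun p => p.2 == 0) mid ->
  unzip2 mid = nseq (size mid) 0.
Proof. by elim: mid => [|p mid IH] //= /andP [/eqP -> /IH ->]. Qed.

Lemma all_zip_nseq0 (X : seq nat) : all (fun p => p.2 == 0) (zip X (nseq (size X) 0)).
Proof. by elim: X. Qed.

Lemma step0_C k a : 0 < a -> stepn k 0 (a, 2) = 3.
Proof. by case: a. Qed.

Lemma step0_D k a : 0 < a -> stepn k 0 (a, 1) = 4.
Proof. by case: a. Qed.

Lemma run0_D k a W : 0 < a -> foldl (stepn k) 0 ((a, 1) :: W) = foldl (stepn k) 4 W.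
Proof. by case: a. Qed.

Lemma Dk_correct k w : 1 < k ->
  (accepts (Dk k) w <-> exists n, word_val w = pair_rep k n (g k k n)).
Proof.
move=> k1; rewrite Dk_accepts; split.
- move: (all_wv k w); case: (word_val w) => [|[p1 p2] W'] //= hW.
  case: ifP => [/eqP [-> ->] | _].
    case: W' hW => [|q W''] /= hW; first by exists 0; rewrite pair_rep0.
    case: ifP => [/andP [/eqP k2 /eqP eq] | _]; last by rewrite run_dead.
    case: W'' hW => [|r W3] /= hW; last by rewrite run_dead.
    by subst k q; exists 1.
  case: ifP => [/andP [p10 /eqP p22] | _].
    case: W' hW => [|q W''] /= hW; last by rewrite run_dead.
    move=> _; exists p1.
    move: hW; rewrite p22 andbT => /andP [p1k p2k].
    rewrite g_small //; last by rewrite lt0n.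
    rewrite /pair_rep !base_rep_single //; last by rewrite lt0n.
  case: ifP => [/andP [p10 /eqP p21] | _]; last by rewrite run_dead.
  move/run_D_inv => [mid [y [E hm]]].
  exists (num k (p1 :: rcons (unzip1 mid) y)).
  rewrite rep_form //; last 2 first.
  + by rewrite lt0n.
  + move: hW; rewrite E all_rcons /= => /andP [/andP [p1k _] /andP [/andP [yk _] hmid]].
    rewrite p1k all_rcons yk /= all_map; apply: sub_all hmid => p /andP [] //.
  by rewrite E p21 size_map -unzip2_zero // zip_unzip.
- move=> [n ->].
  case: (posnP n) => [->|n0]; first by rewrite pair_rep0.
  case: (ltnP n k) => [nk|kn].
    case k2: (k == 2).
      move/eqP: k2 => k2; subst k.
      by have -> : n = 1 by lia.
    rewrite g_small // /pair_rep base_rep_single // base_rep_single //; last by lia.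
    by rewrite /pad /=; case: n n0 nk.
  have [a [s [Hs a0]]] := base_rep_head k n k1 n0.
  case/lastP: s Hs => [|X y] Hs.
    have := size_base_rep k n k1 n0; rewrite Hs /=.
    have : 1 <= trunc_log k n by apply: trunc_log_max; rewrite // expn1.
    lia.
  have En : n = num k (a :: rcons X y) by rewrite -Hs num_base_rep.
  have hall : all (fun d => d < k) (a :: rcons X y) by rewrite -Hs all_base_rep.
  rewrite En rep_form // run0_D // run_D //; exact: all_zip_nseq0.
Qed.

Theorem proposition7 (k l : nat) :
  2 <= k -> 2 <= l -> (k_synchronized k (g k l) <-> k = l).
Proof.
move=> hk hl; split; first exact: sync_eq.
move=> <-; exists (Dk k) => w; exact: Dk_correct.
Qed.
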